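(* Let $n\ge1$. Any two sequences $(a_i)_{i=1}^{3n},(b_i)_{i=1}^{3n}$ with entries in $\{1,2\}$ that have the same cyclic length vector are projective equivalent; i.e., every projective equivalence class of such sequences is determined by its cyclic length vector.
   Context: Sequences $(a_i),(b_i)$ of length $3n$ in $\{1,2\}$ are equivalent if $b_i=a_i$ for all $i$, or $b_i=3-a_i$ for all $i$, or $b_i=a_{3n+1-i}$ for all $i$, or $b_i=3-a_{3n+1-i}$ for all $i$. Define $\sigma_{3n}\cdot a=(a_2,\dots,a_{3n},a_1)$ if $n$ is even and $(a_2,\dots,a_{3n},3-a_1)$ if $n$ is odd. $a,b$ are projective equivalent if $b$ is equivalent to $\sigma_{3n}^k\cdot a$ for some $k\in\mathbb{N}$. The length vector of a sequence $a$ is the ordered list of lengths of its maximal blocks of consecutive equal entries (an ordered partition of $3n$). The cyclic length vector of the projective equivalence class of $a$ is the length vector of a projective equivalent sequence $a'$ with $a'_1\ne a'_{3n}$ if $n$ is even, or with $a'_1=a'_{3n}$ if $n$ is odd (and is $(3n)$ if no such $a'$ exists), regarded as an element of $\mathbb{Z}^m/\langle\sigma_m,\tau_m\rangle$, where $m$ is its number of entries, $\sigma_m$ acts by cyclic shift of entries and $\tau_m$ by reversal of the order of entries. The cyclic length vector of a sequence is that of its projective equivalence class. *)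

(* Defs.v *)
From mathcomp Require Import all_boot.
Set Implicit Arguments. Unset Strict Implicit. Unset Printing Implicit Defensive.

Definition seq12 (n : nat) (a : seq nat) : bool :=
  (size a == 3 * n) && all (fun x => (x == 1) || (x == 2)) a.

Definition flip (a : seq nat) : seq nat := map (fun x => 3 - x) a.

Definition seq_equiv (a b : seq nat) : Prop :=
  b = a \/ b = flip a \/ b = rev a \/ b = flip (rev a).

Definition sigma (n : nat) (a : seq nat) : seq nat :=
  match a with
  | [::] => [::]
  | x :: s => if odd n then rcons s (3 - x) else rcons s x
  end.

Definition proj_equiv (n : nat) (a b : seq nat) : Prop :=
  exists k : nat, seq_equiv (iter k (sigma n) a) b.

(* length vector: lengths of maximal blocks of consecutive equal entries *)
Fixpoint lv_aux (x c : nat) (s : seq nat) : seq nat :=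
  match s with
  | [::] => [:: c]
  | y :: s' => if y == x then lv_aux x c.+1 s' else c :: lv_aux y 1 s'
  end.

Definition length_vector (s : seq nat) : seq nat :=
  match s with
  | [::] => [::]
  | x :: s' => lv_aux x 1 s'
  end.

(* the boundary condition on a' (1-indexed a'_1 and a'_{3n}) *)
Definition cyc_cond (n : nat) (a' : seq nat) : bool :=
  if odd n then nth 0 a' 0 == nth 0 a' (3 * n).-1
  else nth 0 a' 0 != nth 0 a' (3 * n).-1.

Definition is_cyc_lv (n : nat) (a : seq nat) (v : seq nat) : Prop :=
  (exists a', proj_equiv n a a' /\ cyc_cond n a' /\ v = length_vector a')
  \/ ((~ exists a', proj_equiv n a a' /\ cyc_cond n a') /\ v = [:: 3 * n]).

Definition dihedral_eq (v w : seq nat) : Prop :=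
  exists k, w = rot k v \/ w = rot k (rev v).

Definition same_cyc_lv (n : nat) (a b : seq nat) : Prop :=
  exists va vb, is_cyc_lv n a va /\ is_cyc_lv n b vb /\ dihedral_eq va vb.

(* Main.v *)
Require Import Defs.
From mathcomp Require Import all_boot zify.
Set Implicit Arguments. Unset Strict Implicit. Unset Printing Implicit Defensive.

Definition fl (n x : nat) := if odd n then 3 - x else x.
Definition P12 (s : seq nat) := all (fun x => (x == 1) || (x == 2)) s.

Lemma sigma_cons n x s : sigma n (x :: s) = rcons s (fl n x).
Proof. by rewrite /sigma /fl; case: odd. Qed.

Lemma sigma_nil n : sigma n [::] = [::].
Proof. by []. Qed.

Lemma size_sigma n s : size (sigma n s) = size s.
Proof. by case: s => // x t; rewrite sigma_cons size_rcons. Qed.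

Lemma size_iter n k s : size (iter k (sigma n) s) = size s.
Proof. by elim: k => //= k IH; rewrite size_sigma. Qed.

Lemma fl12 n x : (x == 1) || (x == 2) -> (fl n x == 1) || (fl n x == 2).
Proof. by rewrite /fl; case: odd => //; case/orP => /eqP ->. Qed.

Lemma P12_sigma n s : P12 s -> P12 (sigma n s).
Proof.
case: s => // x t; rewrite sigma_cons /P12 /= all_rcons => /andP[hx ht].
by rewrite ht andbT fl12.
Qed.

Lemma P12_iter n k s : P12 s -> P12 (iter k (sigma n) s).
Proof. by move=> h; elim: k => //= k IH; apply: P12_sigma. Qed.

Lemma iter_sigma n s i : i <= size s ->
  iter i (sigma n) s = drop i s ++ map (fl n) (take i s).
Proof.
elim: i => [|i IH] Hi; first by rewrite drop0 take0 cats0.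
rewrite iterS IH ?(ltnW Hi) // (drop_nth 0 Hi) cat_cons sigma_cons (take_nth 0 Hi).
by rewrite map_rcons rcons_cat.
Qed.

Lemma flflK n s : P12 s -> map (fl n) (map (fl n) s) = s.
Proof.
elim: s => //= x s IH /andP[hx hs]; rewrite IH //.
by case/orP: hx => /eqP->; rewrite /fl; case: odd.
Qed.

Lemma sigma_period n s : P12 s -> iter (2 * size s) (sigma n) s = s.
Proof.
move=> h.
have H1 : forall t, P12 t -> iter (size t) (sigma n) t = map (fl n) t.
  by move=> t ht; rewrite iter_sigma // drop_size take_size.
rewrite mul2n -addnn iterD H1 // -{1}(size_map (fl n) s) H1 ?flflK //.
move: h; rewrite /P12 all_map => /allP h; apply/allP => x /h /= hx.
exact: fl12.
Qed.

Lemma sigma_periodk n s k : P12 s -> iter (2 * size s * k) (sigma n) s = s.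
Proof.
move=> h; elim: k => [|k IH]; first by rewrite muln0.
by rewrite mulnS iterD IH sigma_period.
Qed.

Lemma flipflip s : P12 s -> flip (flip s) = s.
Proof.
elim: s => //= x s IH /andP[hx hs]; rewrite IH //.
by case/orP: hx => /eqP->.
Qed.

Lemma P12_flip s : P12 s -> P12 (flip s).
Proof.
elim: s => //= x s IH /andP[hx hs]; rewrite IH // andbT.
by case/orP: hx => /eqP->.
Qed.

Lemma P12_rev s : P12 s -> P12 (rev s).
Proof. by rewrite /P12 all_rev. Qed.

Lemma flip_rev s : flip (rev s) = rev (flip s).
Proof. by rewrite /flip map_rev. Qed.

Lemma sigma_flip n s : sigma n (flip s) = flip (sigma n s).
Proof.
case: s => // x s; rewrite /flip map_cons !sigma_cons map_rcons; congr rcons.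
rewrite /fl; case: odd => //; lia.
Qed.

Lemma iter_flip n k s : iter k (sigma n) (flip s) = flip (iter k (sigma n) s).
Proof. by elim: k => //= k ->; rewrite sigma_flip. Qed.

Lemma sigma_rev_sigma n s : P12 s -> sigma n (rev (sigma n s)) = rev s.
Proof.
case: s => // x s /andP[hx _].
rewrite sigma_cons rev_rcons sigma_cons rev_cons; congr rcons.
by case/orP: hx => /eqP->; rewrite /fl; case: odd.
Qed.

Lemma iter_rev_iter n k s : P12 s ->
  iter k (sigma n) (rev (iter k (sigma n) s)) = rev s.
Proof.
move=> h; elim: k => // k IH.
by rewrite iterSr iterS sigma_rev_sigma ?P12_iter.
Qed.

Lemma rev_iter n k s : P12 s -> exists j,
  rev (iter k (sigma n) s) = iter j (sigma n) (rev s).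
Proof.
case: s => [|x s] h.
  by exists 0; have -> : iter k (sigma n) [::] = [::] by elim: k => //= k ->.
exists (2 * size (x :: s) * k.+1 - k).
rewrite -{1}(iter_rev_iter n k h) -iterD.
have -> : 2 * size (x :: s) * k.+1 - k + k =
    2 * size (rev (iter k (sigma n) (x :: s))) * k.+1.
  rewrite size_rev size_iter /=; nia.
by rewrite sigma_periodk // P12_rev // P12_iter.
Qed.

Definition E (f r : bool) (s : seq nat) : seq nat :=
  (if f then flip else id) (if r then rev s else s).

Lemma P12_E f r s : P12 s -> P12 (E f r s).
Proof. by case: f; case: r => h //=; rewrite ?P12_flip ?P12_rev. Qed.

Lemma size_E f r s : size (E f r s) = size s.
Proof. by case: f; case: r; rewrite /= ?size_map ?size_rev. Qed.

Lemma E_comp f1 r1 f2 r2 s : P12 s ->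
  E f2 r2 (E f1 r1 s) = E (f1 (+) f2) (r1 (+) r2) s.
Proof.
move=> h; case: f1; case: r1; case: f2; case: r2; rewrite /E /= ?revK //;
  rewrite ?flip_rev ?revK ?flipflip // ?P12_rev //.
Qed.

Lemma E_inv f r s : P12 s -> E f r (E f r s) = s.
Proof. by move=> h; rewrite E_comp // !addbb. Qed.

Lemma iter_E n j f r s : P12 s -> exists j',
  iter j (sigma n) (E f r s) = E f r (iter j' (sigma n) s).
Proof.
move=> h; case: r; last first.
  by exists j; case: f; rewrite /E /= ?iter_flip.
have [j' Hj] := rev_iter n j (P12_rev h).
exists j'; rewrite revK in Hj.
case: f; rewrite /E /= ?iter_flip; by rewrite -Hj revK.
Qed.

Definition PE n (a b : seq nat) := exists k f r, b = E f r (iter k (sigma n) a).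

Lemma PE_proj n a b : PE n a b <-> proj_equiv n a b.
Proof.
split.
  case=> k [f [r ->]]; exists k; rewrite /seq_equiv.
  by case: f; case: r; rewrite /E /=; tauto.
case=> k [->|[->|[->|->]]].
- by exists k, false, false.
- by exists k, true, false.
- by exists k, false, true.
- by exists k, true, true.
Qed.

Lemma PE_trans n a b c : P12 a -> PE n a b -> PE n b c -> PE n a c.
Proof.
move=> ha [k [f1 [r1 ->]]] [j [f2 [r2 ->]]].
have [j' ->] := iter_E n j f1 r1 (P12_iter n k ha).
exists (j' + k), (f1 (+) f2), (r1 (+) r2).
by rewrite E_comp ?P12_iter // iterD.
Qed.

Lemma iter_nil n k : iter k (sigma n) [::] = [::].
Proof. by elim: k => //= k ->. Qed.

Lemma PE_sym n a b : P12 a -> PE n a b -> PE n b a.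
Proof.
move=> ha [k [f [r ->]]].
case: a ha => [|x a] ha.
  by exists 0, false, false; rewrite iter_nil /E; case: f; case: r.
have [j' Hj] := iter_E n (2 * size (x :: a) * k.+1 - k) f r
  (P12_E f r (P12_iter n k ha)).
exists j', f, r; rewrite -Hj E_inv ?P12_iter // -iterD.
have -> : 2 * size (x :: a) * k.+1 - k + k = 2 * size (x :: a) * k.+1.
  rewrite /=; nia.
by rewrite sigma_periodk.
Qed.

Fixpoint dec (x : nat) (v : seq nat) : seq nat :=
  match v with [::] => [::] | c :: v' => nseq c x ++ dec (3 - x) v' end.
Definition col x i := if odd i then 3 - x else x.
Definition pos (v : seq nat) := all (fun d => 0 < d) v.
Definition is12 (x : nat) := (x == 1) || (x == 2).

Lemma is12_3 x : is12 x -> is12 (3 - x).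
Proof. by case/orP => /eqP->. Qed.

Lemma is12_col x i : is12 x -> is12 (col x i).
Proof. by rewrite /col; case: odd => //; apply: is12_3. Qed.

Lemma dec_rcons x v c : x <= 3 ->
  dec x (rcons v c) = dec x v ++ nseq c (col x (size v)).
Proof.
elim: v x => [|d v IH] x hx /=; first by rewrite cats0.
rewrite IH ?leq_subr // catA /col /=; congr (_ ++ nseq _ _).
case: odd => /=; lia.
Qed.

Lemma rev_dec x v : x <= 3 -> rev (dec x v) = dec (col x (size v).-1) (rev v).
Proof.
elim: v x => [|d v IH] x hx //.
case E: v => [|e v'].
  by rewrite /= cats0 rev_nseq.
rewrite -E /= rev_cat IH ?leq_subr // rev_nseq rev_cons dec_rcons; last first.
  by rewrite /col; case: odd; lia.
rewrite size_rev; have : 0 < size v by rewrite E.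
case: (size v) => // m _ /=.
rewrite /col /=; case: (odd m) => /=; congr (dec _ _ ++ nseq _ _); lia.
Qed.

Lemma nseq_cons_cat (y : nat) c s : nseq c y ++ y :: s = nseq c.+1 y ++ s.
Proof. by elim: c => //= c ->. Qed.

Lemma decode s x c : P12 (x :: s) -> nseq c x ++ s = dec x (lv_aux x c s).
Proof.
elim: s x c => [|y s IH] x c /=; first by rewrite !cats0.
case/and3P => hx hy hs.
case: eqP => [eyx|ne].
  by rewrite eyx nseq_cons_cat IH //= hx.
rewrite /=; congr (_ ++ _).
have -> : 3 - x = y by move: hx hy ne; do 2 case/orP=> /eqP->.
by rewrite -IH //= hy.
Qed.

Lemma lv_pos x c s : 0 < c -> pos (lv_aux x c s).
Proof.
elim: s x c => [|y s IH] x c hc /=; first by rewrite hc.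
by case: eqP => _; rewrite /= ?hc IH.
Qed.

Lemma lv_nonnil x c s : lv_aux x c s != [::].
Proof. elim: s x c => [|y s IH] x c //=; case: (y == x) => //; apply: IH. Qed.

Lemma flip_dec y w : y <= 3 -> flip (dec y w) = dec (3 - y) w.
Proof.
elim: w y => [|c w IH] y hy //=.
by rewrite /flip map_cat map_nseq -/(flip _) IH ?leq_subr.
Qed.

Lemma size_dec x v : size (dec x v) = sumn v.
Proof. by elim: v x => //= c v IH x; rewrite size_cat size_nseq IH. Qed.

Lemma rot_step n x c v : x <= 3 -> odd (size v).+1 = odd n ->
  iter c (sigma n) (dec x (c :: v)) = dec (3 - x) (rcons v c).
Proof.
move=> hx hp.
rewrite iter_sigma /=; last by rewrite size_cat size_nseq leq_addr.
rewrite drop_size_cat ?size_nseq // take_size_cat ?size_nseq // map_nseq.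
rewrite dec_rcons ?leq_subr //; congr (_ ++ nseq _ _).
move: hp; rewrite /fl /col /= => <-; case: odd => /=; lia.
Qed.

Lemma core n x v k : is12 x -> v != [::] -> pos v -> odd (size v) = odd n ->
  exists j y, is12 y /\ iter j (sigma n) (dec x v) = dec y (rot k v).
Proof.
move=> hx hv hpos hp.
case: (leqP k (size v)) => hk; last first.
  by exists 0, x; rewrite rot_oversize // ltnW.
elim: k hk => [|k IH] hk; first by exists 0, x; rewrite rot0.
have [j [y [hy Hj]]] := IH (ltnW hk).
rewrite rotS //.
have : size (rot k v) = size v by rewrite size_rot.
have : pos (rot k v).
  have pr : perm_eq (rot k v) v by rewrite perm_rot.
  by rewrite /pos (perm_all _ pr).
case: (rot k v) Hj => [|c w] Hj hpw hs.
  by move: hv; rewrite -size_eq0 -hs.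
exists (c + j), (3 - y); split; first exact: is12_3.
rewrite iterD Hj rot1_cons rot_step //; first by case/orP: hy => /eqP->.
by rewrite -hp -hs.
Qed.

Lemma head_dec y w : pos w -> w != [::] -> nth 0 (dec y w) 0 = y.
Proof. by case: w => // [[|d] w'] //. Qed.

Lemma lv_dec x s : P12 (x :: s) ->
  x :: s = dec x (length_vector (x :: s)) /\ pos (length_vector (x :: s))
  /\ length_vector (x :: s) != [::].
Proof.
move=> h; rewrite /length_vector -decode //; split => //; split.
  exact: lv_pos.
exact: lv_nonnil.
Qed.

Lemma parity n a : size a = 3 * n -> 0 < n -> P12 a -> cyc_cond n a ->
  odd (size (length_vector a)) = odd n.
Proof.
case: a => [|x s] hs hn; first by move: hs; rewrite /=; lia.
move=> h; have [Ha [hpos hne]] := lv_dec h.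
set v := length_vector (x :: s) in Ha hpos hne *.
have hx : is12 x by case/andP: h.
have hx3 : x <= 3 by case/orP: hx => /eqP->.
have hlast : nth 0 (x :: s) (3 * n).-1 = col x (size v).-1.
  rewrite -hs -subn1 -(nth_rev 0) /=; last by [].
  rewrite Ha rev_dec // head_dec // ?/pos ?all_rev //.
  by rewrite -size_eq0 size_rev size_eq0.
have hfirst : nth 0 (x :: s) 0 = x by [].
rewrite /cyc_cond hlast hfirst.
have : 0 < size v by rewrite lt0n size_eq0.
case: (size v) => // m _ /=.
rewrite /col; case: (odd n); case: (odd m) => /=;
  by case/orP: hx => /eqP->.
Qed.

Lemma iter_ends n a j : 0 < j < size a ->
  nth 0 (iter j (sigma n) a) 0 = nth 0 a j /\
  nth 0 (iter j (sigma n) a) (size a).-1 = fl n (nth 0 a j.-1).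
Proof.
case/andP=> hj1 hj2.
rewrite iter_sigma; last exact: ltnW.
rewrite !nth_cat size_drop.
rewrite subn_gt0 hj2 nth_drop addn0; split => //.
have -> : ((size a).-1 < size a - j) = false by apply/negbTE; rewrite -leqNgt; lia.
rewrite (nth_map 0); last by rewrite size_take hj2; lia.
rewrite nth_take; last by lia.
congr (fl n (nth 0 a _)); lia.
Qed.

Lemma nth12 a i : P12 a -> i < size a -> is12 (nth 0 a i).
Proof. by move=> /(all_nthP 0) h /h. Qed.

Lemma none_case n a : 0 < n -> size a = 3 * n -> P12 a ->
  (forall j, ~~ cyc_cond n (iter j (sigma n) a)) ->
  ~~ odd n /\ a = nseq (3 * n) (nth 0 a 0).
Proof.
move=> hn hs hP hnc.
have hconst : forall i, i < size a -> nth 0 a i = nth 0 a 0.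
  elim=> [|i IH] hi //.
  have [e1 e2] := iter_ends n (j := i.+1) (a := a) (introT andP (conj (ltn0Sn i) hi)).
  have := hnc i.+1; rewrite /cyc_cond -hs e1 e2 /= -(IH (ltnW hi)) /fl.
  have h1 := nth12 hP hi; have h2 := nth12 hP (ltnW hi).
  case: (odd n) => /=; move: h1 h2; do 2 case/orP=> /eqP->; by [].
have ha : a = nseq (3 * n) (nth 0 a 0).
  apply: (eq_from_nth (x0 := 0)); first by rewrite size_nseq.
  move=> i hi; rewrite nth_nseq -hs hi; exact: hconst.
split => //.
have := hnc 0; rewrite /= /cyc_cond; case: (odd n) => //=.
rewrite -hs (hconst (size a).-1) ?eqxx //; rewrite hs; lia.
Qed.

Lemma match12 y y' w : is12 y -> is12 y' ->
  dec y w = dec y' w \/ dec y w = flip (dec y' w).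
Proof.
move=> hy hy'; rewrite flip_dec; last by case/orP: hy' => /eqP->.
by case/orP: hy => /eqP->; case/orP: hy' => /eqP->; auto.
Qed.

Lemma core2 n a b : 0 < n -> size a = 3 * n -> size b = 3 * n ->
  P12 a -> P12 b -> cyc_cond n a -> cyc_cond n b ->
  dihedral_eq (length_vector a) (length_vector b) -> PE n a b.
Proof.
move=> hn ha hb Pa Pb ca cb [k D].
have hp := parity ha hn Pa ca.
case: a ha Pa ca hp D => [|x s] ha Pa ca hp D; first by move: ha => /=; lia.
case: b hb Pb cb D => [|y t] hb Pb cb D; first by move: hb => /=; lia.
have [Ha [hpos hne]] := lv_dec Pa.
have [Hb _] := lv_dec Pb.
set v := length_vector (x :: s) in Ha hpos hne hp D *.
set w := length_vector (y :: t) in Hb D *.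
have hx : is12 x by case/andP: Pa.
have hy : is12 y by case/andP: Pb.
have hx3 : x <= 3 by case/orP: hx => /eqP->.
case: D => Dw.
  have [j [y' [hy' Hj]]] := core k hx hne hpos hp.
  rewrite Hb Dw; case: (match12 (rot k v) hy hy') => ->.
    by exists j, false, false; rewrite Ha Hj.
  by exists j, true, false; rewrite Ha Hj.
have hrv := rev_dec v hx3; rewrite -Ha in hrv.
have hne' : rev v != [::] by rewrite -size_eq0 size_rev size_eq0.
have hpos' : pos (rev v) by rewrite /pos all_rev.
have hp' : odd (size (rev v)) = odd n by rewrite size_rev.
have [j [y' [hy' Hj]]] := core k (is12_col (size v).-1 hx) hne' hpos' hp'.
rewrite -hrv in Hj.
have [j' Hj'] := iter_E n j false true Pa.
rewrite /E /= in Hj'; rewrite Hj' in Hj.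
rewrite Hb Dw; case: (match12 (rot k (rev v)) hy hy') => ->.
  by exists j', false, true; rewrite -Hj.
by exists j', true, true; rewrite -Hj.
Qed.

Lemma none_all n a : (~ exists a', proj_equiv n a a' /\ cyc_cond n a') ->
  forall j, ~~ cyc_cond n (iter j (sigma n) a).
Proof.
move=> H j; apply/negP => hc; apply: H; exists (iter j (sigma n) a); split => //.
by exists j; left.
Qed.

Lemma dih_size v w : dihedral_eq v w -> size w = size v.
Proof. by case=> k [->|->]; rewrite size_rot ?size_rev. Qed.

Theorem mainTheorem4 (n : nat) (a b : seq nat) :
  1 <= n -> seq12 n a -> seq12 n b -> same_cyc_lv n a b -> proj_equiv n a b.
Proof.
move=> hn /andP[/eqP ha Pa] /andP[/eqP hb Pb] [va [vb [Ca [Cb D]]]].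
rewrite -/(P12 a) in Pa; rewrite -/(P12 b) in Pb.
apply/PE_proj.
case: Ca => [[a' [pa [ca eva]]]|[na eva]]; case: Cb => [[b' [pb [cb evb]]]|[nb evb]]; subst va vb.
- move/PE_proj: pa => pa; move/PE_proj: pb => pb.
  have [k [f [r ea]]] := pa; have [k' [f' [r' eb]]] := pb.
  have Pa' : P12 a' by rewrite ea P12_E // P12_iter.
  have Pb' : P12 b' by rewrite eb P12_E // P12_iter.
  have ha' : size a' = 3 * n by rewrite ea size_E size_iter.
  have hb' : size b' = 3 * n by rewrite eb size_E size_iter.
  have pab := core2 hn ha' hb' Pa' Pb' ca cb D.
  apply: (PE_trans Pa) (PE_sym Pb pb).
  exact: (PE_trans Pa pa pab).
- have [hev _] := none_case hn hb Pb (none_all nb).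
  move/PE_proj: pa => [k [f [r ea]]].
  have Pa' : P12 a' by rewrite ea P12_E // P12_iter.
  have ha' : size a' = 3 * n by rewrite ea size_E size_iter.
  have := parity ha' hn Pa' ca; rewrite -(dih_size D) /=.
  by move: hev; case: odd.
- have [hev _] := none_case hn ha Pa (none_all na).
  move/PE_proj: pb => [k [f [r eb]]].
  have Pb' : P12 b' by rewrite eb P12_E // P12_iter.
  have hb' : size b' = 3 * n by rewrite eb size_E size_iter.
  have := parity hb' hn Pb' cb; rewrite (dih_size D) /=.
  by move: hev; case: odd.
- have [_ ea] := none_case hn ha Pa (none_all na).
  have [_ eb] := none_case hn hb Pb (none_all nb).
  have hx : is12 (nth 0 a 0) by apply: nth12; rewrite // ha; lia.
  have hy : is12 (nth 0 b 0) by apply: nth12; rewrite // hb; lia.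
  rewrite ea eb.
  move: hx hy; set x := nth 0 a 0; set y := nth 0 b 0.
  case/orP=> /eqP->; case/orP=> /eqP->.
  + by exists 0, false, false.
  + by exists 0, true, false; rewrite /E /= /flip map_nseq.
  + by exists 0, true, false; rewrite /E /= /flip map_nseq.
  + by exists 0, false, false.
Qed.
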